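(* Consider the system $x_{t+1}^{(i)} = f_0(x_t^{(i)}) + B(x_t^{(i)})u_t^{(i)} - f(x_t^{(i)},c^{(i)}) + w_t^{(i)}$, $x_1^{(i)}=0$, for $i=1,\dots,N$, $t=1,\dots,T$, under the standing assumptions in the context (full actuation, $\|w_t^{(i)}\|\le W$, e-ISS of $f_0$ with constants $\beta,\gamma,\rho$). Suppose $f(x,c)=Y_1(x)\Theta+Y_2(x)c$ with known $Y_1:\mathbb{R}^n\to\mathbb{R}^{n\times p}$, $Y_2:\mathbb{R}^n\to\mathbb{R}^{n\times h}$, $\|Y_1(x)\|\le K_1$, $\|Y_2(x)\|\le K_2$ for all $x$, and unknown $\Theta\in\mathbb{R}^p$, $c^{(i)}\in\mathbb{R}^h$ with $\|\Theta\|\le K_\Theta$, $\|c^{(i)}\|\le K_c$ for all $i$. Let $\mathcal{K}_1=\{\hat\Theta:\|\hat\Theta\|\le K_\Theta\}$, $\mathcal{K}_2=\{\hat c:\|\hat c\|\le K_c\}$, and define $$C_1=4K_1^2K_\Theta+4K_1K_2K_c+2K_1W,\qquad C_2=4K_2^2K_c+4K_1K_2K_\Theta+2K_2W.$$ (a) OMAC with $\hat f_t^{(i)}=Y_1(x_t^{(i)})\hat\Theta^{(i)}+Y_2(x_t^{(i)})\hat c_t^{(i)}$, using projected online gradient descent for both adapters with learning rates $\bar\eta^{(i)}=\frac{2K_\Theta}{C_1T\sqrt{i}}$ (outer) and $\eta_t^{(i)}=\frac{2K_c}{C_2\sqrt t}$ (inner), satisfies $$\mathsf{ACE}(\mathrm{OMAC})\le\frac{\gamma}{1-\rho}\sqrt{W^2+3\Big(K_\Theta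 C_1\frac{1}{\sqrt N}+K_cC_2\frac{1}{\sqrt T}\Big)}.$$ (b) The baseline adaptive controller, which adapts $\hat\alpha=[\hat\Theta;\hat c]$ jointly at every time step by projected online gradient descent, satisfies $$\mathsf{ACE}(\mathrm{baseline})\le\frac{\gamma}{1-\rho}\sqrt{W^2+3\sqrt{K_\Theta^2+K_c^2}\sqrt{C_1^2+C_2^2}\frac{1}{\sqrt T}}.$$
   Context: Standing assumptions: $x_t^{(i)}\in\mathbb{R}^n$, $u_t^{(i)}\in\mathbb{R}^m$; $f_0:\mathbb{R}^n\to\mathbb{R}^n$ and $B:\mathbb{R}^n\to\mathbb{R}^{n\times m}$ known with $\mathrm{rank}(B(x))=n$ for all $x$; disturbances $w_t^{(i)}$ (possibly adversarial) with $\|w_t^{(i)}\|\le W$; $c^{(i)}$ may be chosen adversarially. $f_0$ is e-ISS: there exist $\beta,\gamma\ge0$, $0\le\rho<1$ such that for every $t$ and $v_1,\dots,v_{t-1}\in\mathbb{R}^n$ the iterates $x_{k+1}=f_0(x_k)+v_k$ satisfy $\|x_t\|\le\beta\rho^{t-1}\|x_1\|+\gamma\sum_{k=1}^{t-1}\rho^{t-1-k}\|v_k\|$. $\|\cdot\|$ is the Euclidean norm for vectors and spectral norm for matrices. $\mathsf{ACE}=\frac1{TN}\sum_{i=1}^N\sum_{t=1}^T\|x_t^{(i)}\|$. Both controllers are certainty-equivalence: at step $(i,t)$ they compute an estimate $\hat f_t^{(i)}$ and apply $u_t^{(i)}=B(x_t^{(i)})^{\dagger}\hat f_t^{(i)}$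 (pseudo-inverse); then they observe $y_t^{(i)}=f_0(x_t^{(i)})+B(x_t^{(i)})u_t^{(i)}-x_{t+1}^{(i)}=f(x_t^{(i)},c^{(i)})-w_t^{(i)}$. Loss: $\ell_t^{(i)}(\hat\Theta,\hat c)=\|Y_1(x_t^{(i)})\hat\Theta+Y_2(x_t^{(i)})\hat c-y_t^{(i)}\|^2$. Projected OGD on a convex set $\mathcal{K}$ with step sizes $\eta_t$: start at a point of $\mathcal{K}$, update $z_{t+1}=\Pi_{\mathcal{K}}(z_t-\eta_t\nabla_t)$ where $\Pi_{\mathcal{K}}$ is Euclidean projection and $\nabla_t$ the gradient of the current cost at $z_t$. OMAC in (a): $\hat\Theta^{(1)}\in\mathcal{K}_1$; in each environment $i$, $\hat c_1^{(i)}\in\mathcal{K}_2$ and $\hat c_{t+1}^{(i)}=\Pi_{\mathcal{K}_2}(\hat c_t^{(i)}-\eta_t^{(i)}\nabla_{\hat c}\ell_t^{(i)}(\hat\Theta^{(i)},\hat c_t^{(i)}))$; after environment $i$, $\hat\Theta^{(i+1)}=\Pi_{\mathcal{K}_1}(\hat\Theta^{(i)}-\bar\eta^{(i)}\sum_{t=1}^T\nabla_{\hat\Theta}\ell_t^{(i)}(\hat\Theta^{(i)},\hat c_t^{(i)}))$. The $c^{(i)}$ are never observed. Baseline in (b): $\hat f_t^{(i)}=Y_1(x_t^{(i)})\hat\Theta_t^{(i)}+Y_2(x_t^{(i)})\hat c_t^{(i)}$, where in each environment $\hat\alpha_t^{(i)}=[\hat\Theta_t^{(i)};\hat c_t^{(i)}]$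 starts in $\bar{\mathcal{K}}=\{[\hat\Theta;\hat c]:\|\hat\Theta\|\le K_\Theta,\|\hat c\|\le K_c\}$ and is updated every step by projected OGD on $\bar{\mathcal K}$ for the loss $\ell_t^{(i)}$ viewed as a function of $\hat\alpha$, with step sizes $\frac{2\sqrt{K_\Theta^2+K_c^2}}{\sqrt{C_1^2+C_2^2}\sqrt t}$. *)

(* Defs.v *)
From HB Require Import structures.
From mathcomp Require Import all_boot all_order all_algebra.
From mathcomp Require Import boolp classical_sets reals.
Set Implicit Arguments. Unset Strict Implicit. Unset Printing Implicit Defensive.
Import Order.TTheory GRing.Theory Num.Theory.
Local Open Scope ring_scope.
Local Open Scope classical_set_scope.

Definition vnorm {R : realType} {k : nat} (v : 'cV[R]_k) : R :=
  Num.sqrt (\sum_(j < k) v j ord0 ^+ 2).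

Definition spec_norm {R : realType} {a b : nat} (A : 'M[R]_(a, b)) : R :=
  sup [set r | exists v : 'cV[R]_b, vnorm v <= 1 /\ r = vnorm (A *m v)].

Definition ball_set {R : realType} {k : nat} (K : R) : set 'cV[R]_k :=
  [set v | vnorm v <= K].

Definition is_proj {R : realType} {k : nat} (S : set 'cV[R]_k) (z q : 'cV[R]_k) :=
  S q /\ forall q', S q' -> vnorm (z - q) <= vnorm (z - q').

(* The Euclidean projection onto S (well defined for nonempty closed convex S). *)
Definition proj {R : realType} {k : nat} (S : set 'cV[R]_k) (z : 'cV[R]_k) : 'cV[R]_k :=
  xget z (is_proj S z).

Definition is_pinv {R : realType} {a b : nat} (A : 'M[R]_(a, b)) (X : 'M[R]_(b, a)) :=
  [/\ A *m X *m A = A, X *m A *m X = X, (A *m X)^T = A *m X & (X *m A)^T = X *m A].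

(* Moore-Penrose pseudo-inverse (exists and is unique). *)
Definition pinv {R : realType} {a b : nat} (A : 'M[R]_(a, b)) : 'M[R]_(b, a) :=
  xget 0 (is_pinv A).

Definition eISS {R : realType} {n : nat} (f0 : 'cV[R]_n -> 'cV[R]_n)
    (beta gamma rho : R) : Prop :=
  forall (x v : nat -> 'cV[R]_n) (t : nat), (1 <= t)%N ->
    (forall k, (1 <= k < t)%N -> x k.+1 = f0 (x k) + v k) ->
    vnorm (x t) <= beta * rho ^+ (t - 1) * vnorm (x 1%N)
                   + gamma * \sum_(1 <= k < t) rho ^+ (t - 1 - k) * vnorm (v k).

(* loss l(Th, c) = || Y1 Th + Y2 c - y ||^2 ; gradients written explicitly. *)
Definition resid {R : realType} {n p h : nat} (Y1x : 'M[R]_(n, p)) (Y2x : 'M[R]_(n, h))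
    (Th : 'cV[R]_p) (ch : 'cV[R]_h) (y : 'cV[R]_n) : 'cV[R]_n :=
  Y1x *m Th + Y2x *m ch - y.

Definition grad_Th {R : realType} {n p h : nat} (Y1x : 'M[R]_(n, p)) (Y2x : 'M[R]_(n, h))
    (Th : 'cV[R]_p) (ch : 'cV[R]_h) (y : 'cV[R]_n) : 'cV[R]_p :=
  2 *: ((Y1x)^T *m resid Y1x Y2x Th ch y).

Definition grad_c {R : realType} {n p h : nat} (Y1x : 'M[R]_(n, p)) (Y2x : 'M[R]_(n, h))
    (Th : 'cV[R]_p) (ch : 'cV[R]_h) (y : 'cV[R]_n) : 'cV[R]_h :=
  2 *: ((Y2x)^T *m resid Y1x Y2x Th ch y).

Definition cl_next {R : realType} {n m p h : nat}
    (f0 : 'cV[R]_n -> 'cV[R]_n) (B : 'cV[R]_n -> 'M[R]_(n, m))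
    (Y1 : 'cV[R]_n -> 'M[R]_(n, p)) (Y2 : 'cV[R]_n -> 'M[R]_(n, h))
    (Theta : 'cV[R]_p) (ci : 'cV[R]_h) (wt : 'cV[R]_n) (x fhat : 'cV[R]_n) : 'cV[R]_n :=
  f0 x + B x *m (pinv (B x) *m fhat) - (Y1 x *m Theta + Y2 x *m ci) + wt.

Definition cl_obs {R : realType} {n m : nat}
    (f0 : 'cV[R]_n -> 'cV[R]_n) (B : 'cV[R]_n -> 'M[R]_(n, m))
    (x fhat xnext : 'cV[R]_n) : 'cV[R]_n :=
  f0 x + B x *m (pinv (B x) *m fhat) - xnext.

(* OMAC inner loop in environment i with fixed outer estimate Thhat.
   omac_env ... k = (x_{k+1}, c^_{k+1}) ; x_1 = 0, c^_1 = ch1. *)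
Fixpoint omac_env {R : realType} {n m p h : nat}
    (f0 : 'cV[R]_n -> 'cV[R]_n) (B : 'cV[R]_n -> 'M[R]_(n, m))
    (Y1 : 'cV[R]_n -> 'M[R]_(n, p)) (Y2 : 'cV[R]_n -> 'M[R]_(n, h))
    (Theta : 'cV[R]_p) (ci : 'cV[R]_h) (wi : nat -> 'cV[R]_n)
    (eta : nat -> R) (Kc : R) (Thhat : 'cV[R]_p) (ch1 : 'cV[R]_h) (k : nat)
    : 'cV[R]_n * 'cV[R]_h :=
  match k with
  | 0%N => (0, ch1)
  | k'.+1 =>
      let st := omac_env f0 B Y1 Y2 Theta ci wi eta Kc Thhat ch1 k' in
      let x := st.1 in let ch := st.2 in
      let t := k'.+1 in
      let fhat := Y1 x *m Thhat + Y2 x *m ch in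
      let x' := cl_next f0 B Y1 Y2 Theta ci (wi t) x fhat in
      let y := cl_obs f0 B x fhat x' in
      (x', proj (ball_set Kc) (ch - eta t *: grad_c (Y1 x) (Y2 x) Thhat ch y))
  end.

(* OMAC outer loop: omac_theta ... j = Th^(j+1), with Th^(1) = Th1. *)
Fixpoint omac_theta {R : realType} {n m p h : nat}
    (f0 : 'cV[R]_n -> 'cV[R]_n) (B : 'cV[R]_n -> 'M[R]_(n, m))
    (Y1 : 'cV[R]_n -> 'M[R]_(n, p)) (Y2 : 'cV[R]_n -> 'M[R]_(n, h))
    (Theta : 'cV[R]_p) (c : nat -> 'cV[R]_h) (w : nat -> nat -> 'cV[R]_n)
    (eta : nat -> R) (etabar : nat -> R) (KTh Kc : R)
    (Th1 : 'cV[R]_p) (ch1 : nat -> 'cV[R]_h) (T : nat) (j : nat) : 'cV[R]_p :=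
  match j with
  | 0%N => Th1
  | j'.+1 =>
      let i := j'.+1 in
      let Th := omac_theta f0 B Y1 Y2 Theta c w eta etabar KTh Kc Th1 ch1 T j' in
      let st := omac_env f0 B Y1 Y2 Theta (c i) (w i) eta Kc Th (ch1 i) in
      let g := \sum_(1 <= t < T.+1)
          (let x := (st t.-1).1 in let ch := (st t.-1).2 in
           let fhat := Y1 x *m Th + Y2 x *m ch in
           let y := cl_obs f0 B x fhat (st t).1 in
           grad_Th (Y1 x) (Y2 x) Th ch y) in
      proj (ball_set KTh) (Th - etabar i *: g)
  end.

Definition omac_x {R : realType} {n m p h : nat}
    (f0 : 'cV[R]_n -> 'cV[R]_n) (B : 'cV[R]_n -> 'M[R]_(n, m))
    (Y1 : 'cV[R]_n -> 'M[R]_(n, p)) (Y2 : 'cV[R]_n -> 'M[R]_(n, h))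
    (Theta : 'cV[R]_p) (c : nat -> 'cV[R]_h) (w : nat -> nat -> 'cV[R]_n)
    (eta : nat -> R) (etabar : nat -> R) (KTh Kc : R)
    (Th1 : 'cV[R]_p) (ch1 : nat -> 'cV[R]_h) (T : nat) (i t : nat) : 'cV[R]_n :=
  (omac_env f0 B Y1 Y2 Theta (c i) (w i) eta Kc
     (omac_theta f0 B Y1 Y2 Theta c w eta etabar KTh Kc Th1 ch1 T i.-1)
     (ch1 i) t.-1).1.

(* Baseline: joint estimate alpha = [Th; c] in 'cV_(p + h). *)
Definition Kbar_set {R : realType} {p h : nat} (KTh Kc : R) : set 'cV[R]_(p + h) :=
  [set a | vnorm (usubmx a) <= KTh /\ vnorm (dsubmx a) <= Kc].

(* base_env ... k = (x_{k+1}, alpha_{k+1}) in environment i. *)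
Fixpoint base_env {R : realType} {n m p h : nat}
    (f0 : 'cV[R]_n -> 'cV[R]_n) (B : 'cV[R]_n -> 'M[R]_(n, m))
    (Y1 : 'cV[R]_n -> 'M[R]_(n, p)) (Y2 : 'cV[R]_n -> 'M[R]_(n, h))
    (Theta : 'cV[R]_p) (ci : 'cV[R]_h) (wi : nat -> 'cV[R]_n)
    (eta : nat -> R) (KTh Kc : R) (a1 : 'cV[R]_(p + h)) (k : nat)
    : 'cV[R]_n * 'cV[R]_(p + h) :=
  match k with
  | 0%N => (0, a1)
  | k'.+1 =>
      let st := base_env f0 B Y1 Y2 Theta ci wi eta KTh Kc a1 k' in
      let x := st.1 in let a := st.2 in
      let Th := usubmx a in let ch := dsubmx a in
      let t := k'.+1 in
      let fhat := Y1 x *m Th + Y2 x *m ch in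
      let x' := cl_next f0 B Y1 Y2 Theta ci (wi t) x fhat in
      let y := cl_obs f0 B x fhat x' in
      let g := col_mx (grad_Th (Y1 x) (Y2 x) Th ch y) (grad_c (Y1 x) (Y2 x) Th ch y) in
      (x', proj (Kbar_set KTh Kc) (a - eta t *: g))
  end.

Definition base_x {R : realType} {n m p h : nat}
    (f0 : 'cV[R]_n -> 'cV[R]_n) (B : 'cV[R]_n -> 'M[R]_(n, m))
    (Y1 : 'cV[R]_n -> 'M[R]_(n, p)) (Y2 : 'cV[R]_n -> 'M[R]_(n, h))
    (Theta : 'cV[R]_p) (c : nat -> 'cV[R]_h) (w : nat -> nat -> 'cV[R]_n)
    (eta : nat -> R) (KTh Kc : R) (a1 : nat -> 'cV[R]_(p + h)) (i t : nat) : 'cV[R]_n :=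
  (base_env f0 B Y1 Y2 Theta (c i) (w i) eta KTh Kc (a1 i) t.-1).1.

Definition ACE {R : realType} {n : nat} (N T : nat) (x : nat -> nat -> 'cV[R]_n) : R :=
  (T * N)%:R^-1 * \sum_(1 <= i < N.+1) \sum_(1 <= t < T.+1) vnorm (x i t).

(* Main.v *)
Require Import Defs.
From HB Require Import structures.
From mathcomp Require Import all_boot all_order all_algebra.
From mathcomp Require Import boolp classical_sets reals.
From mathcomp Require Import ring lra zify.
From Stdlib Require Import Lia.
Set Implicit Arguments. Unset Strict Implicit. Unset Printing Implicit Defensive.
Import Order.TTheory GRing.Theory Num.Theory.
Local Open Scope ring_scope.
Local Open Scope classical_set_scope.

Section Dot.
Variable R : realType.

Definition dot {k : nat} (u v : 'cV[R]_k) : R := (u^T *m v) 0 0.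

Lemma dotE k (u v : 'cV[R]_k) : dot u v = \sum_j u j 0 * v j 0.
Proof. by rewrite /dot mxE; apply: eq_bigr => j _; rewrite mxE. Qed.

Lemma dotC k (u v : 'cV[R]_k) : dot u v = dot v u.
Proof. by rewrite !dotE; apply: eq_bigr => j _; rewrite mulrC. Qed.

Lemma dotDl k (u v z : 'cV[R]_k) : dot (u + v) z = dot u z + dot v z.
Proof. by rewrite /dot linearD mulmxDl mxE. Qed.

Lemma dotDr k (u v z : 'cV[R]_k) : dot z (u + v) = dot z u + dot z v.
Proof. by rewrite /dot mulmxDr mxE. Qed.

Lemma dotZl k a (u z : 'cV[R]_k) : dot (a *: u) z = a * dot u z.
Proof. by rewrite /dot linearZ /= -scalemxAl mxE. Qed.

Lemma dotZr k a (u z : 'cV[R]_k) : dot z (a *: u) = a * dot z u.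
Proof. by rewrite /dot -scalemxAr mxE. Qed.

Lemma dotNl k (u z : 'cV[R]_k) : dot (- u) z = - dot u z.
Proof. by rewrite -scaleN1r dotZl mulN1r. Qed.

Lemma dotNr k (u z : 'cV[R]_k) : dot z (- u) = - dot z u.
Proof. by rewrite -scaleN1r dotZr mulN1r. Qed.

Lemma dotBl k (u v z : 'cV[R]_k) : dot (u - v) z = dot u z - dot v z.
Proof. by rewrite dotDl dotNl. Qed.

Lemma dotBr k (u v z : 'cV[R]_k) : dot z (u - v) = dot z u - dot z v.
Proof. by rewrite dotDr dotNr. Qed.

Lemma dot0l k (z : 'cV[R]_k) : dot 0 z = 0.
Proof. by rewrite /dot linear0 mul0mx mxE. Qed.

Lemma dot_mulmx a b (A : 'M[R]_(a, b)) (u : 'cV[R]_b) (v : 'cV[R]_a) :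
  dot (A *m u) v = dot u (A^T *m v).
Proof. by rewrite /dot trmx_mul mulmxA. Qed.

Lemma dot_ge0 k (u : 'cV[R]_k) : 0 <= dot u u.
Proof. by rewrite dotE; apply: sumr_ge0 => j _; rewrite -expr2 sqr_ge0. Qed.

Lemma dot_eq0 k (u : 'cV[R]_k) : dot u u = 0 -> u = 0.
Proof.
rewrite dotE => /eqP; rewrite psumr_eq0 => [/allP H|j _]; last by rewrite -expr2 sqr_ge0.
apply/matrixP => i j; rewrite (ord1 j) mxE.
have := H i (mem_index_enum _); rewrite mulf_eq0 orbb => /eqP //.
Qed.

Lemma vnormE k (u : 'cV[R]_k) : vnorm u = Num.sqrt (dot u u).
Proof. by rewrite /vnorm dotE; congr Num.sqrt; apply: eq_bigr => j _; rewrite expr2. Qed.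

Lemma vnorm_ge0 k (u : 'cV[R]_k) : 0 <= vnorm u.
Proof. by rewrite vnormE sqrtr_ge0. Qed.

Lemma vnorm_sq k (u : 'cV[R]_k) : vnorm u ^+ 2 = dot u u.
Proof. by rewrite vnormE sqr_sqrtr // dot_ge0. Qed.

Lemma vnorm0 k : vnorm (0 : 'cV[R]_k) = 0.
Proof. by rewrite vnormE dot0l sqrtr0. Qed.

Lemma vnorm_eq0 k (u : 'cV[R]_k) : vnorm u = 0 -> u = 0.
Proof. by move=> H; apply: dot_eq0; rewrite -vnorm_sq H expr2 mulr0. Qed.

Lemma CS k (u v : 'cV[R]_k) : dot u v <= vnorm u * vnorm v.
Proof.
set a := vnorm v; set b := vnorm u.
have Ha : 0 <= a by exact: vnorm_ge0.
have Hb : 0 <= b by exact: vnorm_ge0.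
have H := dot_ge0 (a *: u - b *: v).
rewrite dotBl !dotBr !dotZl !dotZr (dotC v u) -!vnorm_sq -/a -/b in H.
have [a0|] := eqVneq a 0.
  by rewrite a0 mulr0 (vnorm_eq0 a0) dotC dot0l.
have [b0|] := eqVneq b 0.
  by rewrite b0 mul0r (vnorm_eq0 b0) dot0l.
move=> bn0 an0.
have ab : 0 < a * b by rewrite mulr_gt0 // lt0r ?an0 ?bn0.
have : a * b * dot u v <= a * b * (b * a).
  by nra.
by rewrite ler_pM2l // mulrC.
Qed.


Lemma CS_abs k (u v : 'cV[R]_k) : `|dot u v| <= vnorm u * vnorm v.
Proof.
have H1 := CS u v; have H2 := CS (- u) v.
have E : vnorm (- u) = vnorm u by rewrite !vnormE dotNl dotNr opprK.
rewrite dotNl E in H2.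
by rewrite ler_norml H1 andbT lerNl.
Qed.

Lemma vnorm_le k (u : 'cV[R]_k) a : 0 <= a -> dot u u <= a ^+ 2 -> vnorm u <= a.
Proof.
move=> a0 H; rewrite vnormE.
by rewrite -(ger0_norm a0) -sqrtr_sqr ler_sqrt // sqr_ge0.
Qed.

Lemma vnormZ k a (u : 'cV[R]_k) : vnorm (a *: u) = `|a| * vnorm u.
Proof.
by rewrite !vnormE dotZl dotZr mulrA -expr2 sqrtrM ?sqr_ge0 // sqrtr_sqr.
Qed.

Lemma vnormN k (u : 'cV[R]_k) : vnorm (- u) = vnorm u.
Proof. by rewrite -scaleN1r vnormZ normrN normr1 mul1r. Qed.

Lemma vnormD k (u v : 'cV[R]_k) : vnorm (u + v) <= vnorm u + vnorm v.
Proof.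
apply: vnorm_le; first by rewrite addr_ge0 // vnorm_ge0.
rewrite dotDl !dotDr (dotC v u) -(vnorm_sq u) -(vnorm_sq v).
have := CS u v; have := vnorm_ge0 u; have := vnorm_ge0 v; nra.
Qed.

Lemma vnormB k (u v : 'cV[R]_k) : vnorm (u - v) <= vnorm u + vnorm v.
Proof. by rewrite -(vnormN v) vnormD. Qed.

Lemma vnorm_sum (I : Type) (r : seq I) (P : pred I) k (F : I -> 'cV[R]_k) :
  vnorm (\sum_(i <- r | P i) F i) <= \sum_(i <- r | P i) vnorm (F i).
Proof.
apply: (big_ind2 (fun x y => vnorm x <= y)); first by rewrite vnorm0.
  move=> x1 x2 y1 y2 H1 H2; apply: le_trans (vnormD _ _) _; exact: lerD.
by [].
Qed.

Lemma dot_suml (I : Type) (r : seq I) (P : pred I) k (F : I -> 'cV[R]_k) v :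
  dot (\sum_(i <- r | P i) F i) v = \sum_(i <- r | P i) dot (F i) v.
Proof.
exact: (big_morph (fun u => dot u v) (fun x y => dotDl x y v) (dot0l v)).
Qed.

Lemma dot_col a b (u1 v1 : 'cV[R]_a) (u2 v2 : 'cV[R]_b) :
  dot (col_mx u1 u2) (col_mx v1 v2) = dot u1 v1 + dot u2 v2.
Proof.
rewrite !dotE big_split_ord /=; congr (_ + _); apply: eq_bigr => j _;
  by rewrite ?col_mxEu ?col_mxEd.
Qed.

Lemma dot_split a b (u v : 'cV[R]_(a + b)) :
  dot u v = dot (usubmx u) (usubmx v) + dot (dsubmx u) (dsubmx v).
Proof. by rewrite -{1}(vsubmxK u) -{1}(vsubmxK v) dot_col. Qed.

Definition frob a b (A : 'M[R]_(a, b)) : R := \sum_i \sum_j A i j ^+ 2.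

Lemma frob_bound a b (A : 'M[R]_(a, b)) v :
  vnorm (A *m v) <= Num.sqrt (frob A) * vnorm v.
Proof.
have F0 : 0 <= frob A by apply: sumr_ge0 => i _; apply: sumr_ge0 => j _; exact: sqr_ge0.
apply: vnorm_le; first by rewrite mulr_ge0 ?sqrtr_ge0 ?vnorm_ge0.
rewrite exprMn sqr_sqrtr // vnorm_sq dotE /frob mulr_suml.
apply: ler_sum => i _.
have -> : (A *m v) i 0 = dot (row i A)^T v.
  by rewrite mxE dotE; apply: eq_bigr => j _; rewrite !mxE.
have H := CS_abs (row i A)^T v.
have -> : \sum_j A i j ^+ 2 = dot (row i A)^T (row i A)^T.
  by rewrite dotE; apply: eq_bigr => j _; rewrite !mxE expr2.
rewrite -expr2 -vnorm_sq.
rewrite -(vnorm_sq v) -exprMn -(real_normK (num_real (dot _ _))).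
have := normr_ge0 (dot (row i A)^T v); nra.
Qed.

Definition spec_set a b (A : 'M[R]_(a, b)) :=
  [set r | exists v : 'cV[R]_b, vnorm v <= 1 /\ r = vnorm (A *m v)].

Lemma spec_has_sup a b (A : 'M[R]_(a, b)) : has_sup (spec_set A).
Proof.
split; first by exists 0; exists 0; rewrite vnorm0 mulmx0 vnorm0 ler01.
exists (Num.sqrt (frob A)) => r [v [Hv ->]].
apply: le_trans (frob_bound A v) _.
by rewrite ler_piMr ?sqrtr_ge0.
Qed.

Lemma spec_norm_ge0 a b (A : 'M[R]_(a, b)) : 0 <= spec_norm A.
Proof.
apply: (sup_upper_bound (spec_has_sup A)).
by exists 0; rewrite vnorm0 mulmx0 vnorm0 ler01.
Qed.

Lemma spec_bound a b (A : 'M[R]_(a, b)) v : vnorm (A *m v) <= spec_norm A * vnorm v.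
Proof.
have [v0|vn0] := eqVneq (vnorm v) 0.
  by rewrite (vnorm_eq0 v0) mulmx0 vnorm0 vnorm0 mulr0.
have vp : 0 < vnorm v by rewrite lt0r vn0 vnorm_ge0.
have H : spec_set A (vnorm (A *m ((vnorm v)^-1 *: v))).
  exists ((vnorm v)^-1 *: v); split => //.
  by rewrite vnormZ ger0_norm ?invr_ge0 ?vnorm_ge0 // mulVf.
have := sup_upper_bound (spec_has_sup A) H.
rewrite -scalemxAr vnormZ ger0_norm ?invr_ge0 ?vnorm_ge0 //.
by rewrite ler_pdivrMl // mulrC.
Qed.

Lemma spec_bound_tr a b (A : 'M[R]_(a, b)) u : vnorm (A^T *m u) <= spec_norm A * vnorm u.
Proof.
set z := A^T *m u.
have H : vnorm z ^+ 2 <= vnorm u * (spec_norm A * vnorm z).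
  rewrite vnorm_sq {1}/z dot_mulmx trmxK.
  apply: le_trans (CS _ _) _.
  by rewrite ler_wpM2l ?vnorm_ge0 // spec_bound.
have [z0|zn0] := eqVneq (vnorm z) 0.
  by rewrite z0 mulr_ge0 ?spec_norm_ge0 ?vnorm_ge0.
have zp : 0 < vnorm z by rewrite lt0r zn0 vnorm_ge0.
have H2 : vnorm z * vnorm z <= (spec_norm A * vnorm u) * vnorm z.
  by rewrite -expr2 (mulrC (spec_norm A)) -mulrA.
by rewrite ler_pM2r in H2.
Qed.

End Dot.

Lemma pinv_right (R : realType) (n m : nat) (B : 'M[R]_(n, m)) :
  \rank B = n -> B *m pinv B = 1%:M.
Proof.
move=> rk.
have rf : row_free B by rewrite /row_free rk.
have rfM : row_free (B *m B^T).
  apply: inj_row_free => v Hv.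
  have H0 : dot (v *m B)^T (v *m B)^T = 0.
    by rewrite /dot trmxK trmx_mul mulmxA -(mulmxA v) Hv mul0mx mxE.
  have := dot_eq0 H0 => /(congr1 trmx); rewrite trmxK trmx0 => vB0.
  by apply: (row_free_inj rf); rewrite vB0 mul0mx.
have uM : B *m B^T \in unitmx by rewrite -row_free_unit.
have ex : exists X, is_pinv B X.
  exists (B^T *m invmx (B *m B^T)).
  have BX : B *m (B^T *m invmx (B *m B^T)) = 1%:M by rewrite mulmxA mulmxV.
  split.
  - by rewrite BX mul1mx.
  - by rewrite -mulmxA BX mulmx1.
  - by rewrite BX trmx1.
  - rewrite !trmx_mul trmxK trmx_inv trmx_mul trmxK mulmxA //.
have [H1 _ _ _] := xgetPex 0 ex.
apply: (row_free_inj rf); rewrite /= mul1mx; exact: H1.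
Qed.

Section Proj.
Variable R : realType.

Definition convex {k} (S : set 'cV[R]_k) :=
  forall a b (l : R), S a -> S b -> 0 <= l -> l <= 1 -> S ((1 - l) *: a + l *: b).

Lemma vnorm_le_sq k (x y : 'cV[R]_k) : vnorm x <= vnorm y -> dot x x <= dot y y.
Proof. by move=> H; rewrite -!vnorm_sq; have := vnorm_ge0 x; nra. Qed.

Lemma proj_pyth k (S : set 'cV[R]_k) z q u :
  convex S -> is_proj S z q -> S u -> vnorm (q - u) <= vnorm (z - u).
Proof.
move=> cS [Sq Hq] Su.
have key : forall l, 0 <= l -> l <= 1 ->
    2 * l * dot (z - q) (u - q) <= l ^+ 2 * dot (u - q) (u - q).
  move=> l l0 l1.
  have := Hq _ (cS q u l Sq Su l0 l1).
  move/vnorm_le_sq.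
  have -> : z - ((1 - l) *: q + l *: u) = (z - q) - l *: (u - q).
    by apply/matrixP => i j; rewrite !mxE; ring.
  move: (z - q) (u - q) => e d.
  rewrite dotBl !dotBr !dotZl !dotZr (dotC d e) => H; nra.
have Ha : dot (z - q) (u - q) <= 0.
  rewrite leNgt; apply/negP => ap.
  set a := dot (z - q) (u - q) in ap key.
  set b := dot (u - q) (u - q) in key.
  have b0 : 0 <= b by exact: dot_ge0.
  set l := a / (a + b).
  have abp : 0 < a + b by lra.
  have lE : l * (a + b) = a by rewrite /l mulfVK // gt_eqF.
  have l0 : 0 < l by rewrite /l divr_gt0.
  have l1 : l <= 1 by rewrite /l ler_pdivrMr // mul1r; lra.
  have := key l (ltW l0) l1.
  nra.
apply: vnorm_le; first exact: vnorm_ge0.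
rewrite vnorm_sq.
have -> : q - u = - (u - q) by rewrite opprB.
have -> : z - u = (z - q) - (u - q) by apply/matrixP => i j; rewrite !mxE; ring.
have := dot_ge0 (z - q).
move: Ha; move: (z - q) (u - q) => e d Ha He.
rewrite dotNl dotNr opprK dotBl !dotBr (dotC d e); lra.
Qed.

Lemma ball_convex k (K : R) : convex (@ball_set R k K).
Proof.
move=> a b l Ha Hb l0 l1; rewrite /ball_set /= in Ha Hb *.
apply: le_trans (vnormD _ _) _.
rewrite !vnormZ !ger0_norm ?subr_ge0 //.
have -> : K = (1 - l) * K + l * K by ring.
apply: lerD; [apply: ler_wpM2l; lra|apply: ler_wpM2l => //].
Qed.

Lemma ball_proj_ex k (K : R) (z : 'cV[R]_k) : 0 <= K -> exists q, is_proj (ball_set K) z q.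
Proof.
move=> K0.
have [zK|zK] := leP (vnorm z) K.
  exists z; split => // q' _; rewrite subrr vnorm0 vnorm_ge0 //.
have zp : 0 < vnorm z by lra.
exists ((K / vnorm z) *: z); split.
  by rewrite /ball_set /= vnormZ ger0_norm ?divr_ge0 ?vnorm_ge0 // divfK ?gt_eqF.
move=> q' Hq'; rewrite /ball_set /= in Hq'.
have -> : z - (K / vnorm z) *: z = (1 - K / vnorm z) *: z.
  by rewrite scalerBl scale1r.
rewrite vnormZ ger0_norm; last by rewrite subr_ge0 ler_pdivrMr // mul1r ltW.
rewrite mulrBl mul1r divfK ?gt_eqF //.
have := vnormD (z - q') q'; rewrite subrK; lra.
Qed.

Lemma Kbar_convex p h (a b : R) : convex (@Kbar_set R p h a b).
Proof.
move=> x y l [Hx1 Hx2] [Hy1 Hy2] l0 l1; split.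
  rewrite linearD /= !linearZ /=; exact: (ball_convex Hx1 Hy1 l0 l1).
rewrite linearD /= !linearZ /=; exact: (ball_convex Hx2 Hy2 l0 l1).
Qed.

Lemma Kbar_proj_ex p h (a b : R) (z : 'cV[R]_(p + h)) : 0 <= a -> 0 <= b ->
  exists q, is_proj (Kbar_set a b) z q.
Proof.
move=> a0 b0.
have [qu [Squ Hqu]] := ball_proj_ex (usubmx z) a0.
have [qd [Sqd Hqd]] := ball_proj_ex (dsubmx z) b0.
exists (col_mx qu qd); split.
  by rewrite /Kbar_set /= col_mxKu col_mxKd.
move=> q' [Hq1 Hq2].
apply: vnorm_le; first exact: vnorm_ge0.
rewrite vnorm_sq dot_split (dot_split (z - q')) !linearB /= col_mxKu col_mxKd.
apply: lerD; apply: vnorm_le_sq; [exact: Hqu|exact: Hqd].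
Qed.

End Proj.

Section OGD.
Variable R : realType.

Lemma telescope (c d : nat -> R) M T :
  (forall t, 0 <= c t <= c t.+1) -> (forall t, (1 <= t)%N -> 0 <= d t <= M) ->
  \sum_(1 <= t < T.+1) c t * (d t - d t.+1) + c T * d T.+1 <= c T * M.
Proof.
move=> Hc Hd; elim: T => [|T IH].
  rewrite big_geq // add0r; have := Hd 1%N isT; have := Hc 0%N.
  move=> /andP[c0 _] /andP[_ d1]; exact: ler_wpM2l.
rewrite big_nat_recr //=.
have := Hc T => /andP[cT cT1].
have := Hd T.+1 isT => /andP[d0 dM].
have := Hd T.+2 isT => /andP[d0' _].
nra.
Qed.

Lemma sum_isqrt T :
  \sum_(1 <= t < T.+1) (Num.sqrt (t%:R : R))^-1 <= 2 * Num.sqrt (T%:R).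
Proof.
elim: T => [|T IH]; first by rewrite big_geq // sqrtr0 mulr0.
rewrite big_nat_recr //=; move: IH.
set s := Num.sqrt (T%:R : R); set s' := Num.sqrt (T.+1%:R : R).
have s0 : 0 <= s by exact: sqrtr_ge0.
have s'p : 0 < s' by rewrite sqrtr_gt0 ltr0n.
have ss : s' ^+ 2 = s ^+ 2 + 1 by rewrite !sqr_sqrtr ?ler0n // -natr1.
have H : s'^-1 <= 2 * (s' - s).
  rewrite -[X in X <= _]mul1r ler_pdivrMr //.
  have ss' : s <= s' by rewrite ler_sqrt ?ler0n // ler_nat.
  nra.
lra.
Qed.

Lemma ogd k (S : set 'cV[R]_k) (z g : nat -> 'cV[R]_k) (eta : nat -> R) (u : 'cV[R]_k)
    (D G : R) (T : nat) :
  convex S -> S u -> S (z 1%N) ->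
  (forall t, (1 <= t)%N -> is_proj S (z t - eta t *: g t) (z t.+1)) ->
  (forall a b, S a -> S b -> vnorm (a - b) <= D) ->
  (forall t, (1 <= t <= T)%N -> vnorm (g t) <= G) ->
  0 <= D -> 0 <= G ->
  (forall t, eta t = D / (G * Num.sqrt t%:R)) ->
  \sum_(1 <= t < T.+1) dot (g t) (z t - u) <= 3 / 2 * D * G * Num.sqrt T%:R.
Proof.
move=> cS Su Sz1 Hz HD Hg D0 G0 Heta.
have Sz : forall t, (1 <= t)%N -> S (z t).
  by case=> // t _; case: t => // t; have [] := Hz t.+1 isT.
have [G00|Gn0] := eqVneq G 0.
  rewrite G00 in Hg *; rewrite mulr0 mul0r big_nat_cond big1 // => t /andP[/andP[t1 tT] _].
  have H : vnorm (g t) <= 0 by apply: Hg; rewrite t1 -ltnS tT.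
  have : vnorm (g t) = 0 by apply/eqP; rewrite eq_le H vnorm_ge0.
  by move/vnorm_eq0 ->; rewrite dot0l.
have [D00|Dn0] := eqVneq D 0.
  rewrite D00 in HD *; rewrite mulr0 !mul0r big_nat_cond big1 // => t /andP[/andP[t1 tT] _].
  have := HD _ _ (Sz t t1) Su => H.
  have : vnorm (z t - u) = 0 by apply/eqP; rewrite eq_le H vnorm_ge0.
  by move/vnorm_eq0 ->; rewrite dotC dot0l.
have Gp : 0 < G by rewrite lt0r Gn0.
have Dp : 0 < D by rewrite lt0r Dn0.
pose c t := G * Num.sqrt (t%:R : R) / (2 * D).
pose d t := dot (z t - u) (z t - u).
have step : forall t, (1 <= t <= T)%N ->
    dot (g t) (z t - u) <= c t * (d t - d t.+1) + D * G / 2 * (Num.sqrt (t%:R : R))^-1.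
  move=> t /andP[t1 tT].
  have st : 0 < Num.sqrt (t%:R : R) by rewrite sqrtr_gt0 ltr0n.
  have P := proj_pyth cS (Hz t t1) Su.
  move/vnorm_le_sq: P.
  have -> : z t - eta t *: g t - u = (z t - u) - eta t *: g t.
    by apply/matrixP => i j; rewrite !mxE; ring.
  have de : dot (z t - u) (z t - u) = d t by [].
  have gG : dot (g t) (g t) <= G ^+ 2.
    rewrite -vnorm_sq; have := Hg t; rewrite t1 tT => /(_ isT).
    have := vnorm_ge0 (g t); nra.
  rewrite -/(d t.+1); move: de; move: (z t - u) => e de.
  rewrite dotBl !dotBr !dotZl !dotZr de (dotC e (g t)) => H.
  have h1 : c t * eta t = 1 / 2.
    by rewrite Heta /c; field; rewrite gt_eqF ?gt_eqF //.
  have h2 : D * G / 2 * (Num.sqrt (t%:R : R))^-1 = eta t * G ^+ 2 / 2.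
    by rewrite Heta; field; rewrite gt_eqF ?gt_eqF //.
  have c0 : 0 <= c t by rewrite /c divr_ge0 ?mulr_ge0 ?sqrtr_ge0 // ?mulr_ge0 // ltW.
  have e0 : 0 <= eta t by rewrite Heta divr_ge0 ?mulr_ge0 ?sqrtr_ge0 // ltW.
  rewrite h2.
  have H2 := ler_wpM2l c0 H.
  have E : c t * (d t - eta t * dot (g t) e -
    (eta t * dot (g t) e - eta t * (eta t * dot (g t) (g t)))) =
    c t * d t - 2 * (c t * eta t) * dot (g t) e + (c t * eta t) * (eta t * dot (g t) (g t)).
    by ring.
  rewrite h1 in E.
  have H3 := ler_wpM2l e0 gG.
  lra.
have S1 : \sum_(1 <= t < T.+1) dot (g t) (z t - u) <=
    \sum_(1 <= t < T.+1) (c t * (d t - d t.+1) + D * G / 2 * (Num.sqrt (t%:R : R))^-1).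
  rewrite big_nat_cond [X in _ <= X]big_nat_cond; apply: ler_sum.
  by move=> t /andP[/andP[t1 tT] _]; apply: step; rewrite t1 -ltnS tT.
rewrite big_split /= -mulr_sumr in S1.
have Hc : forall t, 0 <= c t <= c t.+1.
  move=> t; have D2 : 0 < 2 * D by rewrite mulr_gt0.
  rewrite /c !divr_ge0 ?mulr_ge0 ?sqrtr_ge0 ?(ltW D2) ?(ltW Gp) //=.
  rewrite ler_pM2r ?invr_gt0 // ler_pM2l // ler_sqrt ?ler0n // ler_nat.
  exact: leqnSn.
have Hd : forall t, (1 <= t)%N -> 0 <= d t <= D ^+ 2.
  move=> t t1; rewrite /d dot_ge0 /= -vnorm_sq.
  have := HD _ _ (Sz t t1) Su; have := vnorm_ge0 (z t - u); nra.
have T1 := @telescope c d (D ^+ 2) T Hc Hd.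
have T2 := sum_isqrt T.
have cd : 0 <= c T * d T.+1.
  have := Hc T => /andP[c0 _]; have := Hd T.+1 isT => /andP[d0 _]; exact: mulr_ge0.
have cT : c T * D ^+ 2 = D * G * Num.sqrt (T%:R) / 2.
  by rewrite /c; field; rewrite gt_eqF.
have DG0 : 0 <= D * G / 2 by rewrite divr_ge0 ?mulr_ge0 ?ltW.
have T3 := ler_wpM2l DG0 T2.
lra.
Qed.

End OGD.

Section ACE.
Variable R : realType.

Lemma cs_seq (r : seq nat) (a : nat -> R) :
  (\sum_(i <- r) a i) ^+ 2 <= (size r)%:R * \sum_(i <- r) a i ^+ 2.
Proof.
elim: r => [|j r IH]; first by rewrite !big_nil expr0n /= mul0r.
rewrite !big_cons /= -natr1.
set S := \sum_(i <- r) a i in IH *; set Q := \sum_(i <- r) a i ^+ 2 in IH *.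
set M := (size r)%:R in IH *.
have M0 : 0 <= M by rewrite ler0n.
have Q0 : 0 <= Q by rewrite sumr_ge0 // => i _; rewrite sqr_ge0.
have [Mz|Mp] := eqVneq M 0.
  rewrite Mz mul0r in IH.
  have S0 : S = 0 by apply/eqP; rewrite -sqrf_eq0 eq_le IH sqr_ge0.
  rewrite S0 Mz; nra.
have Mpos : 0 < M by rewrite lt0r Mp.
have key : 2 * S * a j <= Q + M * a j ^+ 2.
  have : M * (2 * S * a j) <= M * (Q + M * a j ^+ 2).
    have := sqr_ge0 (S - M * a j); nra.
  by rewrite ler_pM2l.
nra.
Qed.

Lemma geo_rec (rho : R) (a : nat -> R) t : (1 <= t)%N ->
  \sum_(1 <= k < t.+1) rho ^+ (t.+1 - 1 - k) * a k =
  rho * \sum_(1 <= k < t) rho ^+ (t - 1 - k) * a k + a t.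
Proof.
move=> t1; rewrite big_nat_recr //= subn1 /= subnn expr0 mul1r; congr (_ + _).
rewrite mulr_sumr big_nat_cond [RHS]big_nat_cond; apply: eq_bigr => k /andP[/andP[_ kt] _].
rewrite mulrA -exprS; congr (_ ^+ _ * _).
lia.
Qed.

Lemma geo_sum (rho : R) (a : nat -> R) T :
  0 <= rho -> rho < 1 -> (forall k, 0 <= a k) ->
  \sum_(1 <= t < T.+1) \sum_(1 <= k < t) rho ^+ (t - 1 - k) * a k
    <= (1 - rho)^-1 * \sum_(1 <= t < T.+1) a t.
Proof.
move=> r0 r1 a0.
pose I t := \sum_(1 <= k < t) rho ^+ (t - 1 - k) * a k.
have I0 : forall t, 0 <= I t.
  by move=> t; apply: sumr_ge0 => k _; rewrite mulr_ge0 ?exprn_ge0.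
have inv : forall T, (1 - rho) * \sum_(1 <= t < T.+1) I t + I T.+1 =
                     \sum_(1 <= t < T.+1) a t.
  elim=> [|T' IH]; first by rewrite !big_geq // mulr0 add0r /I big_geq.
  rewrite (big_nat_recr T'.+1) // (big_nat_recr T'.+1) //= -IH /I (@geo_rec rho a T'.+1) //; ring.
have := inv T; have := I0 T.+1; rewrite -/(I _).
rewrite ler_pdivlMl ?subr_gt0 //.
move=> H1 H2.
have -> : \sum_(1 <= t < T.+1) \sum_(1 <= k < t) rho ^+ (t - 1 - k) * a k =
          \sum_(1 <= t < T.+1) I t by [].
lra.
Qed.


Lemma size_index_iota1 N : size (index_iota 1 N.+1) = N.
Proof. by rewrite /index_iota size_iota subn1. Qed.

Lemma ace_bound n (f0 : 'cV[R]_n -> 'cV[R]_n) beta gamma rho N T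
    (x v : nat -> nat -> 'cV[R]_n) (S : R) :
  (0 < N)%N -> (0 < T)%N -> 0 <= gamma -> 0 <= rho -> rho < 1 -> eISS f0 beta gamma rho ->
  (forall i, (1 <= i <= N)%N -> x i 1%N = 0) ->
  (forall i k, (1 <= i <= N)%N -> (1 <= k)%N -> x i k.+1 = f0 (x i k) + v i k) ->
  \sum_(1 <= i < N.+1) \sum_(1 <= t < T.+1) vnorm (v i t) ^+ 2 <= (T * N)%:R * S ->
  ACE N T x <= gamma / (1 - rho) * Num.sqrt S.
Proof.
move=> N0 T0 g0 r0 r1 HE Hx1 Hx HS.
have step1 : forall i t, (1 <= i <= N)%N -> (1 <= t)%N ->
    vnorm (x i t) <= gamma * \sum_(1 <= k < t) rho ^+ (t - 1 - k) * vnorm (v i k).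
  move=> i t Hi t1.
  have := HE (x i) (v i) t t1 (fun k hk => Hx i k Hi (proj1 (andP hk))).
  by rewrite Hx1 // vnorm0 mulr0 add0r.
set X := \sum_(1 <= i < N.+1) \sum_(1 <= t < T.+1) vnorm (v i t).
have step2 : \sum_(1 <= i < N.+1) \sum_(1 <= t < T.+1) vnorm (x i t)
    <= gamma / (1 - rho) * X.
  rewrite /X mulr_sumr big_nat_cond [X in _ <= X]big_nat_cond.
  apply: ler_sum => i /andP[/andP[i1 iN] _].
  have Hi : (1 <= i <= N)%N by rewrite i1 -ltnS iN.
  apply: (@le_trans _ _ (\sum_(1 <= t < T.+1) gamma *
     \sum_(1 <= k < t) rho ^+ (t - 1 - k) * vnorm (v i k))).
    rewrite big_nat_cond [X in _ <= X]big_nat_cond.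
    by apply: ler_sum => t /andP[/andP[t1 _] _]; apply: step1.
  rewrite -mulr_sumr -mulrA ler_wpM2l //.
  apply: geo_sum => // k; exact: vnorm_ge0.
have X0 : 0 <= X by apply: sumr_ge0 => i _; apply: sumr_ge0 => t _; exact: vnorm_ge0.
have TNp : 0 < (T * N)%:R :> R by rewrite ltr0n muln_gt0 N0 T0.
have Q0 : 0 <= \sum_(1 <= i < N.+1) \sum_(1 <= t < T.+1) vnorm (v i t) ^+ 2.
  by apply: sumr_ge0 => i _; apply: sumr_ge0 => t _; exact: sqr_ge0.
have S0 : 0 <= S.
  by have := le_trans Q0 HS; rewrite pmulr_rge0.
have step3 : X ^+ 2 <= (T * N)%:R * \sum_(1 <= i < N.+1) \sum_(1 <= t < T.+1) vnorm (v i t) ^+ 2.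
  apply: le_trans (cs_seq _ _) _.
  rewrite size_index_iota1 natrM (mulrC (T%:R)) -mulrA ler_wpM2l ?ler0n // mulr_sumr.
  apply: ler_sum => i _.
  by have := cs_seq (index_iota 1 T.+1) (fun t => vnorm (v i t)); rewrite size_index_iota1.
have step4 : X <= (T * N)%:R * Num.sqrt S.
  have H : X ^+ 2 <= ((T * N)%:R * Num.sqrt S) ^+ 2.
    rewrite exprMn sqr_sqrtr // expr2 -mulrA.
    apply: le_trans step3 _; rewrite ler_wpM2l // ltW //.
  have Y0 := mulr_ge0 (ltW TNp) (sqrtr_ge0 S).
  move: H Y0; set Y := _ * Num.sqrt S; nra.
rewrite /ACE.
have gr : 0 <= gamma / (1 - rho) by rewrite divr_ge0 // subr_ge0 ltW.
rewrite ler_pdivrMl //.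
apply: le_trans step2 _.
have := ler_wpM2l gr step4.
move=> H; apply: le_trans H _.
by rewrite mulrCA.
Qed.

End ACE.

Section Model.
Variable R : realType.

Lemma step_regret n p h (Y1x : 'M[R]_(n, p)) (Y2x : 'M[R]_(n, h)) Th ch Theta c w y :
  y = Y1x *m Theta + Y2x *m c - w ->
  dot (Y1x *m Th + Y2x *m ch - y) (Y1x *m Th + Y2x *m ch - y) <=
  dot w w + dot (grad_Th Y1x Y2x Th ch y) (Th - Theta)
          + dot (grad_c Y1x Y2x Th ch y) (ch - c).
Proof.
move=> Hy.
rewrite /grad_Th /grad_c !dotZl !dot_mulmx !trmxK.
have -> : resid Y1x Y2x Th ch y = Y1x *m Th + Y2x *m ch - y by [].
have Ew : w = (Y1x *m Th + Y2x *m ch - y) - (Y1x *m (Th - Theta) + Y2x *m (ch - c)).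
  by apply/matrixP => i j; rewrite Hy !mulmxBr !mxE; ring.
rewrite Ew.
move: (Y1x *m Th + Y2x *m ch - y) => r.
move: (Y1x *m (Th - Theta)) (Y2x *m (ch - c)) => d1 d2.
rewrite dotBl !dotBr (dotC (d1 + d2) r) dotDr.
have := dot_ge0 (d1 + d2); lra.
Qed.

Lemma spec_le a b (A : 'M[R]_(a, b)) v K L :
  spec_norm A <= K -> vnorm v <= L -> vnorm (A *m v) <= K * L.
Proof.
move=> HK HL; apply: le_trans (spec_bound A v) _.
apply: ler_pM => //; [exact: spec_norm_ge0|exact: vnorm_ge0].
Qed.

Lemma resid_bound n p h (Y1x : 'M[R]_(n, p)) (Y2x : 'M[R]_(n, h)) Th ch Theta c w
    K1 K2 KTh Kc W :
  spec_norm Y1x <= K1 -> spec_norm Y2x <= K2 ->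
  vnorm Th <= KTh -> vnorm Theta <= KTh -> vnorm ch <= Kc -> vnorm c <= Kc ->
  vnorm w <= W ->
  vnorm (resid Y1x Y2x Th ch (Y1x *m Theta + Y2x *m c - w)) <=
    2 * K1 * KTh + 2 * K2 * Kc + W.
Proof.
move=> H1 H2 HT HT' Hc Hc' Hw; rewrite /resid.
have h1 := spec_le H1 HT; have h2 := spec_le H2 Hc.
have h3 := spec_le H1 HT'; have h4 := spec_le H2 Hc'.
have := vnormB (Y1x *m Th + Y2x *m ch) (Y1x *m Theta + Y2x *m c - w).
have := vnormD (Y1x *m Th) (Y2x *m ch).
have := vnormB (Y1x *m Theta + Y2x *m c) w.
have := vnormD (Y1x *m Theta) (Y2x *m c).
lra.
Qed.

Lemma gradTh_bound n p h (Y1x : 'M[R]_(n, p)) (Y2x : 'M[R]_(n, h)) Th ch Theta c w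
    K1 K2 KTh Kc W :
  spec_norm Y1x <= K1 -> spec_norm Y2x <= K2 ->
  vnorm Th <= KTh -> vnorm Theta <= KTh -> vnorm ch <= Kc -> vnorm c <= Kc ->
  vnorm w <= W ->
  vnorm (grad_Th Y1x Y2x Th ch (Y1x *m Theta + Y2x *m c - w)) <=
    4 * K1 ^+ 2 * KTh + 4 * K1 * K2 * Kc + 2 * K1 * W.
Proof.
move=> H1 H2 HT HT' Hc Hc' Hw.
have Hr := resid_bound H1 H2 HT HT' Hc Hc' Hw.
rewrite /grad_Th vnormZ ger0_norm // -mulrA.
have := spec_bound_tr Y1x (resid Y1x Y2x Th ch (Y1x *m Theta + Y2x *m c - w)).
have K10 : 0 <= K1 by apply: le_trans H1; exact: spec_norm_ge0.
have := ler_wpM2l K10 Hr.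
have := ler_wpM2r (vnorm_ge0 (resid Y1x Y2x Th ch (Y1x *m Theta + Y2x *m c - w))) H1.
nra.
Qed.

Lemma gradc_bound n p h (Y1x : 'M[R]_(n, p)) (Y2x : 'M[R]_(n, h)) Th ch Theta c w
    K1 K2 KTh Kc W :
  spec_norm Y1x <= K1 -> spec_norm Y2x <= K2 ->
  vnorm Th <= KTh -> vnorm Theta <= KTh -> vnorm ch <= Kc -> vnorm c <= Kc ->
  vnorm w <= W ->
  vnorm (grad_c Y1x Y2x Th ch (Y1x *m Theta + Y2x *m c - w)) <=
    4 * K2 ^+ 2 * Kc + 4 * K1 * K2 * KTh + 2 * K2 * W.
Proof.
move=> H1 H2 HT HT' Hc Hc' Hw.
have Hr := resid_bound H1 H2 HT HT' Hc Hc' Hw.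
rewrite /grad_c vnormZ ger0_norm // -mulrA.
have := spec_bound_tr Y2x (resid Y1x Y2x Th ch (Y1x *m Theta + Y2x *m c - w)).
have K20 : 0 <= K2 by apply: le_trans H2; exact: spec_norm_ge0.
have := ler_wpM2l K20 Hr.
have := ler_wpM2r (vnorm_ge0 (resid Y1x Y2x Th ch (Y1x *m Theta + Y2x *m c - w))) H2.
nra.
Qed.

Lemma obs_eq n m p h (f0 : 'cV[R]_n -> 'cV[R]_n) (B : 'cV[R]_n -> 'M[R]_(n, m))
    (Y1 : 'cV[R]_n -> 'M[R]_(n, p)) (Y2 : 'cV[R]_n -> 'M[R]_(n, h)) Theta ci wt x fhat :
  cl_obs f0 B x fhat (cl_next f0 B Y1 Y2 Theta ci wt x fhat) =
  Y1 x *m Theta + Y2 x *m ci - wt.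
Proof.
rewrite /cl_obs /cl_next.
move: (f0 x) (B x *m (pinv (B x) *m fhat)) (Y1 x *m Theta + Y2 x *m ci) => a b F.
by apply/matrixP => i j; rewrite !mxE; ring.
Qed.

Lemma next_eq n m p h (f0 : 'cV[R]_n -> 'cV[R]_n) (B : 'cV[R]_n -> 'M[R]_(n, m))
    (Y1 : 'cV[R]_n -> 'M[R]_(n, p)) (Y2 : 'cV[R]_n -> 'M[R]_(n, h)) Theta ci wt x fhat :
  \rank (B x) = n ->
  cl_next f0 B Y1 Y2 Theta ci wt x fhat =
  f0 x + (fhat - (Y1 x *m Theta + Y2 x *m ci - wt)).
Proof.
move=> rk; rewrite /cl_next mulmxA pinv_right // mul1mx.
move: (f0 x) (Y1 x *m Theta + Y2 x *m ci) => a F.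
by apply/matrixP => i j; rewrite !mxE; ring.
Qed.

End Model.

Section Env.
Variable R : realType.

Definition est_err {n p h} (Y1 : 'cV[R]_n -> 'M[R]_(n, p)) (Y2 : 'cV[R]_n -> 'M[R]_(n, h))
  Theta ci (wt : 'cV[R]_n) x Thh ch : 'cV[R]_n :=
  Y1 x *m Thh + Y2 x *m ch - (Y1 x *m Theta + Y2 x *m ci - wt).

Lemma proj_ball_is k (K : R) (z : 'cV[R]_k) : 0 <= K -> is_proj (ball_set K) z (proj (ball_set K) z).
Proof. by move=> K0; apply: xgetPex; exact: ball_proj_ex. Qed.

Lemma proj_Kbar_is p h (a b : R) (z : 'cV[R]_(p + h)) : 0 <= a -> 0 <= b ->
  is_proj (Kbar_set a b) z (proj (Kbar_set a b) z).
Proof. by move=> a0 b0; apply: xgetPex; exact: Kbar_proj_ex. Qed.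

Variables (n m p h : nat) (f0 : 'cV[R]_n -> 'cV[R]_n) (B : 'cV[R]_n -> 'M[R]_(n, m))
    (Y1 : 'cV[R]_n -> 'M[R]_(n, p)) (Y2 : 'cV[R]_n -> 'M[R]_(n, h)).

Lemma omac_env_succ Theta ci wi eta Kc Thh ch1 k :
  let st := omac_env f0 B Y1 Y2 Theta ci wi eta Kc Thh ch1 in
  st k.+1 = (let x := (st k).1 in let ch := (st k).2 in
      let fhat := Y1 x *m Thh + Y2 x *m ch in
      let x' := cl_next f0 B Y1 Y2 Theta ci (wi k.+1) x fhat in
      let y := cl_obs f0 B x fhat x' in
      (x', proj (ball_set Kc) (ch - eta k.+1 *: grad_c (Y1 x) (Y2 x) Thh ch y))).
Proof. by []. Qed.

Lemma omac_env_succ2 Theta ci wi eta Kc Thh ch1 k :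
  (omac_env f0 B Y1 Y2 Theta ci wi eta Kc Thh ch1 k.+1).2 =
  proj (ball_set Kc) ((omac_env f0 B Y1 Y2 Theta ci wi eta Kc Thh ch1 k).2 - eta k.+1 *:
     grad_c (Y1 (omac_env f0 B Y1 Y2 Theta ci wi eta Kc Thh ch1 k).1)
            (Y2 (omac_env f0 B Y1 Y2 Theta ci wi eta Kc Thh ch1 k).1) Thh
            (omac_env f0 B Y1 Y2 Theta ci wi eta Kc Thh ch1 k).2
            (Y1 (omac_env f0 B Y1 Y2 Theta ci wi eta Kc Thh ch1 k).1 *m Theta +
             Y2 (omac_env f0 B Y1 Y2 Theta ci wi eta Kc Thh ch1 k).1 *m ci - wi k.+1)).
Proof. by rewrite omac_env_succ /= obs_eq. Qed.


Lemma omac_env_lemma Theta ci wi eta Kc Thh ch1 T K1 K2 KTh W C1 C2 :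
  (forall x, \rank (B x) = n) ->
  (forall t, (1 <= t <= T)%N -> vnorm (wi t) <= W) ->
  (forall x, spec_norm (Y1 x) <= K1) -> (forall x, spec_norm (Y2 x) <= K2) ->
  vnorm Theta <= KTh -> vnorm ci <= Kc -> vnorm Thh <= KTh -> vnorm ch1 <= Kc ->
  C1 = 4 * K1 ^+ 2 * KTh + 4 * K1 * K2 * Kc + 2 * K1 * W ->
  C2 = 4 * K2 ^+ 2 * Kc + 4 * K1 * K2 * KTh + 2 * K2 * W ->
  0 <= C2 -> 0 <= W ->
  (forall t, eta t = 2 * Kc / (C2 * Num.sqrt t%:R)) ->
  let st := omac_env f0 B Y1 Y2 Theta ci wi eta Kc Thh ch1 in
  [/\ (forall k, (1 <= k)%N -> (st k).1 =
          f0 (st k.-1).1 + est_err Y1 Y2 Theta ci (wi k) (st k.-1).1 Thh (st k.-1).2),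
      \sum_(1 <= t < T.+1) vnorm (est_err Y1 Y2 Theta ci (wi t) (st t.-1).1 Thh (st t.-1).2) ^+ 2
        <= T%:R * W ^+ 2
           + dot (\sum_(1 <= t < T.+1) grad_Th (Y1 (st t.-1).1) (Y2 (st t.-1).1) Thh (st t.-1).2
                    (Y1 (st t.-1).1 *m Theta + Y2 (st t.-1).1 *m ci - wi t)) (Thh - Theta)
           + 3 / 2 * (2 * Kc) * C2 * Num.sqrt T%:R,
      vnorm (\sum_(1 <= t < T.+1) grad_Th (Y1 (st t.-1).1) (Y2 (st t.-1).1) Thh (st t.-1).2
                    (Y1 (st t.-1).1 *m Theta + Y2 (st t.-1).1 *m ci - wi t)) <= C1 * T%:R
    & (forall t, (1 <= t)%N ->
        (let x := (st t.-1).1 in let ch := (st t.-1).2 in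
         let fhat := Y1 x *m Thh + Y2 x *m ch in
         let y := cl_obs f0 B x fhat (st t).1 in
         grad_Th (Y1 x) (Y2 x) Thh ch y) =
        grad_Th (Y1 (st t.-1).1) (Y2 (st t.-1).1) Thh (st t.-1).2
                    (Y1 (st t.-1).1 *m Theta + Y2 (st t.-1).1 *m ci - wi t))].
Proof.
move=> rk Hw HY1 HY2 HTh Hci HThh Hch1 EC1 EC2 C20 W0 Heta st.
have Kc0 : 0 <= Kc by apply: le_trans Hci; exact: vnorm_ge0.
have Hchb : forall t, vnorm (st t).2 <= Kc.
  case=> [|t] //; rewrite /st omac_env_succ /=.
  exact: (proj1 (proj_ball_is _ Kc0)).
have Hobs : forall t, (1 <= t)%N ->
    cl_obs f0 B (st t.-1).1 (Y1 (st t.-1).1 *m Thh + Y2 (st t.-1).1 *m (st t.-1).2) (st t).1 =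
    Y1 (st t.-1).1 *m Theta + Y2 (st t.-1).1 *m ci - wi t.
  by case=> // t _; rewrite /st omac_env_succ /= obs_eq.
split.
- case=> // k _; rewrite /st omac_env_succ /= next_eq //.
- pose gT t := grad_Th (Y1 (st t.-1).1) (Y2 (st t.-1).1) Thh (st t.-1).2
                    (Y1 (st t.-1).1 *m Theta + Y2 (st t.-1).1 *m ci - wi t).
  pose gC t := grad_c (Y1 (st t.-1).1) (Y2 (st t.-1).1) Thh (st t.-1).2
                    (Y1 (st t.-1).1 *m Theta + Y2 (st t.-1).1 *m ci - wi t).
  have S1 : \sum_(1 <= t < T.+1) vnorm (est_err Y1 Y2 Theta ci (wi t) (st t.-1).1 Thh (st t.-1).2) ^+ 2
     <= \sum_(1 <= t < T.+1) (W ^+ 2 + dot (gT t) (Thh - Theta) + dot (gC t) ((st t.-1).2 - ci)).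
    rewrite big_nat_cond [X in _ <= X]big_nat_cond; apply: ler_sum => t /andP[/andP[t1 tT] _].
    rewrite vnorm_sq /est_err.
    apply: le_trans (step_regret _ _ erefl) _.
    rewrite lerD2r lerD2r -vnorm_sq.
    have := Hw t; rewrite t1 /= => /(_ tT) Hwt.
    have := vnorm_ge0 (wi t); nra.
  rewrite !big_split /= sumr_const_nat subn1 /= -dot_suml in S1.
  have O := @ogd R h (ball_set Kc) (fun t => (st t.-1).2) gC eta ci (2 * Kc) C2 T
    (@ball_convex R h Kc) Hci Hch1.
  have O' : \sum_(1 <= t < T.+1) dot (gC t) ((st t.-1).2 - ci) <=
            3 / 2 * (2 * Kc) * C2 * Num.sqrt T%:R.
    apply: O => //.
    + case=> // t _.
      change (is_proj (ball_set Kc) ((st t).2 - eta t.+1 *: gC t.+1) (st t.+1).2).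
      rewrite /st omac_env_succ2.
      exact: proj_ball_is.
    + move=> a b; rewrite /ball_set /= => Ha Hb.
      have := vnormB a b; lra.
    + move=> t /andP[t1 tT]; rewrite EC2; apply: gradc_bound => //.
      by apply: Hw; rewrite t1.
    + by rewrite mulr_ge0.
  have -> : T%:R * W ^+ 2 = W ^+ 2 *+ T by rewrite mulr_natl.
  lra.
- apply: le_trans (vnorm_sum _ _ _) _.
  apply: (@le_trans _ _ (\sum_(1 <= t < T.+1) C1)).
    rewrite big_nat_cond [X in _ <= X]big_nat_cond; apply: ler_sum => t /andP[/andP[t1 tT] _].
    rewrite EC1; apply: gradTh_bound => //.
    by apply: Hw; rewrite t1.
  by rewrite sumr_const_nat subn1 /= mulr_natr.
- by move=> t t1 /=; rewrite Hobs.
Qed.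

End Env.

Section Base.
Variable R : realType.
Variables (n m p h : nat) (f0 : 'cV[R]_n -> 'cV[R]_n) (B : 'cV[R]_n -> 'M[R]_(n, m))
    (Y1 : 'cV[R]_n -> 'M[R]_(n, p)) (Y2 : 'cV[R]_n -> 'M[R]_(n, h)).

Lemma base_env_succ1 Theta ci wi eta KTh Kc a1 k :
  (base_env f0 B Y1 Y2 Theta ci wi eta KTh Kc a1 k.+1).1 =
  cl_next f0 B Y1 Y2 Theta ci (wi k.+1) (base_env f0 B Y1 Y2 Theta ci wi eta KTh Kc a1 k).1
    (Y1 (base_env f0 B Y1 Y2 Theta ci wi eta KTh Kc a1 k).1 *m
        usubmx (base_env f0 B Y1 Y2 Theta ci wi eta KTh Kc a1 k).2 +
     Y2 (base_env f0 B Y1 Y2 Theta ci wi eta KTh Kc a1 k).1 *m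
        dsubmx (base_env f0 B Y1 Y2 Theta ci wi eta KTh Kc a1 k).2).
Proof. by []. Qed.

Lemma base_env_succ2 Theta ci wi eta KTh Kc a1 k :
  let st := base_env f0 B Y1 Y2 Theta ci wi eta KTh Kc a1 in
  (st k.+1).2 =
  proj (Kbar_set KTh Kc) ((st k).2 - eta k.+1 *:
     col_mx (grad_Th (Y1 (st k).1) (Y2 (st k).1) (usubmx (st k).2) (dsubmx (st k).2)
              (Y1 (st k).1 *m Theta + Y2 (st k).1 *m ci - wi k.+1))
            (grad_c (Y1 (st k).1) (Y2 (st k).1) (usubmx (st k).2) (dsubmx (st k).2)
              (Y1 (st k).1 *m Theta + Y2 (st k).1 *m ci - wi k.+1))).
Proof. by move=> st; rewrite /st /= obs_eq. Qed.

Lemma base_env_lemma Theta ci wi eta KTh Kc a1 T K1 K2 W C1 C2 :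
  (forall x, \rank (B x) = n) ->
  (forall t, (1 <= t <= T)%N -> vnorm (wi t) <= W) ->
  (forall x, spec_norm (Y1 x) <= K1) -> (forall x, spec_norm (Y2 x) <= K2) ->
  vnorm Theta <= KTh -> vnorm ci <= Kc -> Kbar_set KTh Kc a1 ->
  C1 = 4 * K1 ^+ 2 * KTh + 4 * K1 * K2 * Kc + 2 * K1 * W ->
  C2 = 4 * K2 ^+ 2 * Kc + 4 * K1 * K2 * KTh + 2 * K2 * W ->
  0 <= C1 -> 0 <= C2 -> 0 <= W ->
  (forall t, eta t = 2 * Num.sqrt (KTh ^+ 2 + Kc ^+ 2) /
                     (Num.sqrt (C1 ^+ 2 + C2 ^+ 2) * Num.sqrt t%:R)) ->
  let st := base_env f0 B Y1 Y2 Theta ci wi eta KTh Kc a1 in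
  (forall k, (1 <= k)%N -> (st k).1 =
       f0 (st k.-1).1 + est_err Y1 Y2 Theta ci (wi k) (st k.-1).1
                                (usubmx (st k.-1).2) (dsubmx (st k.-1).2)) /\
  \sum_(1 <= t < T.+1) vnorm (est_err Y1 Y2 Theta ci (wi t) (st t.-1).1
                                (usubmx (st t.-1).2) (dsubmx (st t.-1).2)) ^+ 2
    <= T%:R * W ^+ 2 + 3 / 2 * (2 * Num.sqrt (KTh ^+ 2 + Kc ^+ 2))
                         * Num.sqrt (C1 ^+ 2 + C2 ^+ 2) * Num.sqrt T%:R.
Proof.
move=> rk Hw HY1 HY2 HTh Hci Ha1 EC1 EC2 C10 C20 W0 Heta st.
have KTh0 : 0 <= KTh by apply: le_trans HTh; exact: vnorm_ge0.
have Kc0 : 0 <= Kc by apply: le_trans Hci; exact: vnorm_ge0.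
have Hab : forall t, Kbar_set KTh Kc (st t).2.
  case=> [|t] //; rewrite /st base_env_succ2.
  exact: (proj1 (proj_Kbar_is _ KTh0 Kc0)).
split.
  case=> // k _; rewrite /st base_env_succ1 next_eq //.
pose gT t := grad_Th (Y1 (st t.-1).1) (Y2 (st t.-1).1) (usubmx (st t.-1).2) (dsubmx (st t.-1).2)
                    (Y1 (st t.-1).1 *m Theta + Y2 (st t.-1).1 *m ci - wi t).
pose gC t := grad_c (Y1 (st t.-1).1) (Y2 (st t.-1).1) (usubmx (st t.-1).2) (dsubmx (st t.-1).2)
                    (Y1 (st t.-1).1 *m Theta + Y2 (st t.-1).1 *m ci - wi t).
pose g t := col_mx (gT t) (gC t).
have S1 : \sum_(1 <= t < T.+1) vnorm (est_err Y1 Y2 Theta ci (wi t) (st t.-1).1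
                                (usubmx (st t.-1).2) (dsubmx (st t.-1).2)) ^+ 2
     <= \sum_(1 <= t < T.+1) (W ^+ 2 + dot (g t) ((st t.-1).2 - col_mx Theta ci)).
  rewrite big_nat_cond [X in _ <= X]big_nat_cond; apply: ler_sum => t /andP[/andP[t1 tT] _].
  rewrite vnorm_sq /est_err.
  apply: le_trans (step_regret _ _ erefl) _.
  rewrite dot_split !linearB /= !col_mxKu !col_mxKd addrA lerD2r lerD2r -vnorm_sq.
  have := Hw t; rewrite t1 /= => /(_ tT) Hwt.
  have := vnorm_ge0 (wi t); nra.
rewrite big_split /= sumr_const_nat subn1 /= in S1.
set s1 := Num.sqrt (KTh ^+ 2 + Kc ^+ 2) in Heta *.
set s2 := Num.sqrt (C1 ^+ 2 + C2 ^+ 2) in Heta *.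
have s10 : 0 <= s1 by exact: sqrtr_ge0.
have s20 : 0 <= s2 by exact: sqrtr_ge0.
have Su : Kbar_set KTh Kc (col_mx Theta ci) by rewrite /Kbar_set /= col_mxKu col_mxKd.
have O' : \sum_(1 <= t < T.+1) dot (g t) ((st t.-1).2 - col_mx Theta ci) <=
            3 / 2 * (2 * s1) * s2 * Num.sqrt T%:R.
  apply: (@ogd R (p + h) (Kbar_set KTh Kc) (fun t => (st t.-1).2) g eta (col_mx Theta ci)
      (2 * s1) s2 T (@Kbar_convex R p h KTh Kc) Su Ha1) => //.
  + case=> // t _.
    change (is_proj (Kbar_set KTh Kc) ((st t).2 - eta t.+1 *: g t.+1) (st t.+1).2).
    rewrite /st base_env_succ2.
    exact: proj_Kbar_is.
  + move=> a b [Ha1' Ha2] [Hb1 Hb2].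
    apply: vnorm_le; first by rewrite mulr_ge0.
    have s1sq : s1 ^+ 2 = KTh ^+ 2 + Kc ^+ 2 by rewrite /s1 sqr_sqrtr // addr_ge0 // sqr_ge0.
    rewrite dot_split !linearB /= -!vnorm_sq exprMn s1sq.
    have e1 : vnorm (usubmx a - usubmx b) <= 2 * KTh.
      have := vnormB (usubmx a) (usubmx b); lra.
    have e2 : vnorm (dsubmx a - dsubmx b) <= 2 * Kc.
      have := vnormB (dsubmx a) (dsubmx b); lra.
    have := vnorm_ge0 (usubmx a - usubmx b); have := vnorm_ge0 (dsubmx a - dsubmx b).
    nra.
  + move=> t /andP[t1 tT].
    have HwT : vnorm (wi t) <= W by apply: Hw; rewrite t1.
    have [u1 u2] := Hab t.-1.
    have G1 : vnorm (gT t) <= C1 by rewrite EC1; apply: gradTh_bound.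
    have G2 : vnorm (gC t) <= C2 by rewrite EC2; apply: gradc_bound.
    apply: vnorm_le => //.
    have s2sq : s2 ^+ 2 = C1 ^+ 2 + C2 ^+ 2 by rewrite /s2 sqr_sqrtr // addr_ge0 // sqr_ge0.
    rewrite /g dot_col -!vnorm_sq s2sq.
    have := vnorm_ge0 (gT t); have := vnorm_ge0 (gC t); nra.
  + by rewrite mulr_ge0.
have -> : T%:R * W ^+ 2 = W ^+ 2 *+ T by rewrite mulr_natl.
lra.
Qed.

End Base.

Lemma omac_theta_succ (R : realType) n m p h (f0 : 'cV[R]_n -> 'cV[R]_n) (B : 'cV[R]_n -> 'M[R]_(n, m))
    (Y1 : 'cV[R]_n -> 'M[R]_(n, p)) (Y2 : 'cV[R]_n -> 'M[R]_(n, h))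
    Theta c w eta etabar KTh Kc Th1 ch1 T j :
  omac_theta f0 B Y1 Y2 Theta c w eta etabar KTh Kc Th1 ch1 T j.+1 =
  proj (ball_set KTh) (omac_theta f0 B Y1 Y2 Theta c w eta etabar KTh Kc Th1 ch1 T j
     - etabar j.+1 *: \sum_(1 <= t < T.+1)
       grad_Th (Y1 (omac_env f0 B Y1 Y2 Theta (c j.+1) (w j.+1) eta Kc
                   (omac_theta f0 B Y1 Y2 Theta c w eta etabar KTh Kc Th1 ch1 T j) (ch1 j.+1) t.-1).1)
               (Y2 (omac_env f0 B Y1 Y2 Theta (c j.+1) (w j.+1) eta Kc
                   (omac_theta f0 B Y1 Y2 Theta c w eta etabar KTh Kc Th1 ch1 T j) (ch1 j.+1) t.-1).1)
               (omac_theta f0 B Y1 Y2 Theta c w eta etabar KTh Kc Th1 ch1 T j)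
               (omac_env f0 B Y1 Y2 Theta (c j.+1) (w j.+1) eta Kc
                   (omac_theta f0 B Y1 Y2 Theta c w eta etabar KTh Kc Th1 ch1 T j) (ch1 j.+1) t.-1).2
               (Y1 (omac_env f0 B Y1 Y2 Theta (c j.+1) (w j.+1) eta Kc
                   (omac_theta f0 B Y1 Y2 Theta c w eta etabar KTh Kc Th1 ch1 T j) (ch1 j.+1) t.-1).1
                 *m Theta +
                Y2 (omac_env f0 B Y1 Y2 Theta (c j.+1) (w j.+1) eta Kc
                   (omac_theta f0 B Y1 Y2 Theta c w eta etabar KTh Kc Th1 ch1 T j) (ch1 j.+1) t.-1).1
                 *m c j.+1 - w j.+1 t)).
Proof.
rewrite [LHS]/=; congr (proj _ (_ - _ *: _)).
rewrite big_nat_cond [RHS]big_nat_cond; apply: eq_bigr => t /andP[/andP[t1 _] _].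
case: t t1 => // t _.
by rewrite omac_env_succ /= obs_eq.
Qed.

Lemma final_a (R : realType) (T N : nat) (W KTh Kc C1 C2 : R) (d : nat -> R) :
  (0 < T)%N -> (0 < N)%N ->
  \sum_(1 <= i < N.+1) d i <= 3 / 2 * (2 * KTh) * (C1 * T%:R) * Num.sqrt N%:R ->
  \sum_(1 <= i < N.+1) (T%:R * W ^+ 2 + d i + 3 / 2 * (2 * Kc) * C2 * Num.sqrt T%:R)
    <= (T * N)%:R * (W ^+ 2 + 3 * (KTh * C1 / Num.sqrt N%:R + Kc * C2 / Num.sqrt T%:R)).
Proof.
move=> T0 N0 O.
have sN : Num.sqrt N%:R ^+ 2 = N%:R :> R by rewrite sqr_sqrtr ?ler0n.
have sT : Num.sqrt T%:R ^+ 2 = T%:R :> R by rewrite sqr_sqrtr ?ler0n.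
have sNp : 0 < Num.sqrt N%:R :> R by rewrite sqrtr_gt0 ltr0n.
have sTp : 0 < Num.sqrt T%:R :> R by rewrite sqrtr_gt0 ltr0n.
rewrite !big_split !sumr_const_nat subSS subn0 /=.
set sq := Num.sqrt T%:R in sT sTp O *.
set sn := Num.sqrt N%:R in sN sNp O *.
rewrite -(mulr_natl (T%:R * W ^+ 2)) -(mulr_natl (3 / 2 * (2 * Kc) * C2 * sq)) natrM.
have E : T%:R * N%:R * (W ^+ 2 + 3 * (KTh * C1 / sn + Kc * C2 / sq)) =
   N%:R * (T%:R * W ^+ 2) + 3 / 2 * (2 * KTh) * (C1 * T%:R) * sn
   + N%:R * (3 / 2 * (2 * Kc) * C2 * sq).
  by rewrite -sT -sN; field; rewrite !gt_eqF.
rewrite E; lra.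
Qed.

Theorem corollary4 (R : realType) (n m p h N T : nat)
    (f0 : 'cV[R]_n -> 'cV[R]_n) (B : 'cV[R]_n -> 'M[R]_(n, m))
    (Y1 : 'cV[R]_n -> 'M[R]_(n, p)) (Y2 : 'cV[R]_n -> 'M[R]_(n, h))
    (Theta : 'cV[R]_p) (c : nat -> 'cV[R]_h) (w : nat -> nat -> 'cV[R]_n)
    (beta gamma rho W K1 K2 KTh Kc : R)
    (Th1 : 'cV[R]_p) (ch1 : nat -> 'cV[R]_h) (a1 : nat -> 'cV[R]_(p + h)) :
  (0 < N)%N -> (0 < T)%N ->
  0 <= beta -> 0 <= gamma -> 0 <= rho -> rho < 1 ->
  eISS f0 beta gamma rho ->
  (forall x, \rank (B x) = n) ->
  (forall i t, (1 <= i <= N)%N -> (1 <= t <= T)%N -> vnorm (w i t) <= W) ->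
  (forall x, spec_norm (Y1 x) <= K1) ->
  (forall x, spec_norm (Y2 x) <= K2) ->
  vnorm Theta <= KTh ->
  (forall i, (1 <= i <= N)%N -> vnorm (c i) <= Kc) ->
  let C1 := 4 * K1 ^+ 2 * KTh + 4 * K1 * K2 * Kc + 2 * K1 * W in
  let C2 := 4 * K2 ^+ 2 * Kc + 4 * K1 * K2 * KTh + 2 * K2 * W in
  (* (a) OMAC *)
  (vnorm Th1 <= KTh ->
   (forall i, (1 <= i <= N)%N -> vnorm (ch1 i) <= Kc) ->
   let etabar := fun i : nat => 2 * KTh / (C1 * T%:R * Num.sqrt i%:R) in
   let eta := fun t : nat => 2 * Kc / (C2 * Num.sqrt t%:R) in
   ACE N T (omac_x f0 B Y1 Y2 Theta c w eta etabar KTh Kc Th1 ch1 T)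
   <= gamma / (1 - rho) *
      Num.sqrt (W ^+ 2 + 3 * (KTh * C1 / Num.sqrt N%:R + Kc * C2 / Num.sqrt T%:R)))
  /\
  (* (b) baseline *)
  ((forall i, (1 <= i <= N)%N -> Kbar_set KTh Kc (a1 i)) ->
   let eta := fun t : nat =>
     2 * Num.sqrt (KTh ^+ 2 + Kc ^+ 2) / (Num.sqrt (C1 ^+ 2 + C2 ^+ 2) * Num.sqrt t%:R) in
   ACE N T (base_x f0 B Y1 Y2 Theta c w eta KTh Kc a1)
   <= gamma / (1 - rho) *
      Num.sqrt (W ^+ 2 + 3 * Num.sqrt (KTh ^+ 2 + Kc ^+ 2)
                         * Num.sqrt (C1 ^+ 2 + C2 ^+ 2) / Num.sqrt T%:R)).
Proof.
move=> N0 T0 b0 g0 r0 r1 HE rk Hw HY1 HY2 HTh Hc C1 C2.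
have N1 : (1 <= 1 <= N)%N by rewrite leqnn N0.
have T1 : (1 <= 1 <= T)%N by rewrite leqnn T0.
have KTh0 : 0 <= KTh by apply: le_trans HTh; exact: vnorm_ge0.
have Kc0 : 0 <= Kc by apply: le_trans (Hc 1%N N1); exact: vnorm_ge0.
have W0 : 0 <= W by apply: le_trans (Hw 1%N 1%N N1 T1); exact: vnorm_ge0.
have K10 : 0 <= K1 by apply: le_trans (HY1 0); exact: spec_norm_ge0.
have K20 : 0 <= K2 by apply: le_trans (HY2 0); exact: spec_norm_ge0.
have C10 : 0 <= C1 by rewrite /C1; rewrite !addr_ge0 ?mulr_ge0 ?exprn_ge0.
have C20 : 0 <= C2 by rewrite /C2; rewrite !addr_ge0 ?mulr_ge0 ?exprn_ge0.
have sN : Num.sqrt N%:R ^+ 2 = N%:R :> R by rewrite sqr_sqrtr ?ler0n.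
have sT : Num.sqrt T%:R ^+ 2 = T%:R :> R by rewrite sqr_sqrtr ?ler0n.
have sNp : 0 < Num.sqrt N%:R :> R by rewrite sqrtr_gt0 ltr0n.
have sTp : 0 < Num.sqrt T%:R :> R by rewrite sqrtr_gt0 ltr0n.
split.
- move=> HTh1 Hch1; cbv zeta.
  set etabar := (fun i : nat => 2 * KTh / (C1 * T%:R * Num.sqrt i%:R)).
  set eta := (fun t : nat => 2 * Kc / (C2 * Num.sqrt t%:R)).
  pose Thh j := omac_theta f0 B Y1 Y2 Theta c w eta etabar KTh Kc Th1 ch1 T j.
  have HThb : forall j, vnorm (Thh j) <= KTh.
    case=> [|j] //; rewrite /Thh omac_theta_succ.
    exact: (proj1 (proj_ball_is _ KTh0)).
  pose st i := omac_env f0 B Y1 Y2 Theta (c i) (w i) eta Kc (Thh i.-1) (ch1 i).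
  pose G i := \sum_(1 <= t < T.+1) grad_Th (Y1 (st i t.-1).1) (Y2 (st i t.-1).1) (Thh i.-1)
       (st i t.-1).2 (Y1 (st i t.-1).1 *m Theta + Y2 (st i t.-1).1 *m c i - w i t).
  have EL := fun i (Hi : (1 <= i <= N)%N) =>
    (@omac_env_lemma R n m p h f0 B Y1 Y2 Theta (c i) (w i) eta Kc (Thh i.-1) (ch1 i) T
      K1 K2 KTh W C1 C2 rk (fun t Ht => Hw i t Hi Ht) HY1 HY2 HTh (Hc i Hi) (HThb i.-1)
      (Hch1 i Hi) erefl erefl C20 W0 (fun t => erefl)).
  apply: (@ace_bound R n f0 beta gamma rho N T _
     (fun i t => est_err Y1 Y2 Theta (c i) (w i t) (st i t.-1).1 (Thh i.-1) (st i t.-1).2)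
     _ N0 T0 g0 r0 r1 HE).
  + by [].
  + move=> i k Hi k1; have [rec _ _ _] := EL i Hi.
    exact: (rec k k1).
  + pose d i := dot (G i) (Thh i.-1 - Theta).
    have O : \sum_(1 <= i < N.+1) d i <=
        3 / 2 * (2 * KTh) * (C1 * T%:R) * Num.sqrt N%:R.
      apply: (@ogd R p (ball_set KTh) (fun j => Thh j.-1) G etabar Theta (2 * KTh) (C1 * T%:R) N
          (@ball_convex R p KTh) HTh HTh1) => //.
      * case=> // j _.
        change (is_proj (ball_set KTh) (Thh j - etabar j.+1 *: G j.+1) (Thh j.+1)).
        rewrite /Thh omac_theta_succ.
        exact: proj_ball_is.
      * move=> a b; rewrite /ball_set /= => Ha Hb.
        have := vnormB a b; lra.
      * move=> j Hj; by have [_ _ gb _] := EL j Hj.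
      * by rewrite mulr_ge0.
      * by rewrite mulr_ge0 ?ler0n.
    apply: (@le_trans _ _ (\sum_(1 <= i < N.+1)
       (T%:R * W ^+ 2 + d i + 3 / 2 * (2 * Kc) * C2 * Num.sqrt T%:R))); last first.
      exact: (@final_a R T N W KTh Kc C1 C2 d T0 N0 O).
    rewrite big_nat_cond [X in _ <= X]big_nat_cond; apply: ler_sum => i /andP[/andP[i1 iN] _].
    have Hi : (1 <= i <= N)%N by rewrite i1 -ltnS iN.
    by have [_ H _ _] := EL i Hi.
- move=> Ha1; cbv zeta.
  set eta := (fun t : nat => 2 * Num.sqrt (KTh ^+ 2 + Kc ^+ 2) /
                 (Num.sqrt (C1 ^+ 2 + C2 ^+ 2) * Num.sqrt t%:R)).
  pose st i := base_env f0 B Y1 Y2 Theta (c i) (w i) eta KTh Kc (a1 i).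
  have EL : forall i, (1 <= i <= N)%N ->
    (forall k, (1 <= k)%N -> (st i k).1 =
       f0 (st i k.-1).1 + est_err Y1 Y2 Theta (c i) (w i k) (st i k.-1).1
                                (usubmx (st i k.-1).2) (dsubmx (st i k.-1).2)) /\
    (\sum_(1 <= t < T.+1) vnorm (est_err Y1 Y2 Theta (c i) (w i t) (st i t.-1).1
                                (usubmx (st i t.-1).2) (dsubmx (st i t.-1).2)) ^+ 2
    <= T%:R * W ^+ 2 + 3 / 2 * (2 * Num.sqrt (KTh ^+ 2 + Kc ^+ 2))
                         * Num.sqrt (C1 ^+ 2 + C2 ^+ 2) * Num.sqrt T%:R).
    move=> i Hi.
    exact: (@base_env_lemma R n m p h f0 B Y1 Y2 Theta (c i) (w i) eta KTh Kc (a1 i) T K1 K2 W C1 C2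
      rk (fun t Ht => Hw i t Hi Ht) HY1 HY2 HTh (Hc i Hi) (Ha1 i Hi) erefl erefl C10 C20 W0 (fun t => erefl)).
  apply: (@ace_bound R n f0 beta gamma rho N T _
     (fun i t => est_err Y1 Y2 Theta (c i) (w i t) (st i t.-1).1
                   (usubmx (st i t.-1).2) (dsubmx (st i t.-1).2)) _ N0 T0 g0 r0 r1 HE).
  + by [].
  + move=> i k Hi k1; have [rec _] := EL i Hi.
    exact: (rec k k1).
  + set s1 := Num.sqrt (KTh ^+ 2 + Kc ^+ 2) in EL *.
    set s2 := Num.sqrt (C1 ^+ 2 + C2 ^+ 2) in EL *.
    apply: (@le_trans _ _ (\sum_(1 <= i < N.+1) (T%:R * W ^+ 2 + 3 / 2 * (2 * s1) * s2 * Num.sqrt T%:R))).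
      rewrite big_nat_cond [X in _ <= X]big_nat_cond; apply: ler_sum => i /andP[/andP[i1 iN] _].
      have Hi : (1 <= i <= N)%N by rewrite i1 -ltnS iN.
      by have [_ H] := EL i Hi.
    set sq := Num.sqrt T%:R in sT sTp *.
    rewrite sumr_const_nat subn1 /= -[_ *+ N]mulr_natl natrM.
    rewrite le_eqVlt; apply/orP; left; apply/eqP.
    by rewrite -sT; field; rewrite gt_eqF.
Qed.
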